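(* Let $(A,B,C,D)\in\mathcal{M}_k^j(\rho)$. Then $C_p,D_p\neq 0$ for all $p=1,2$. In particular, $$\left\{\Omega_j\omega_r\::\:r=\tfrac{j}{2},j,k-\tfrac{j}{2}-1,k-1\right\}\subset\mathrm{Eval}(G),$$ with $C_1\in\mathrm{Evec}(G,\Omega_j\omega_{\frac{j}{2}})$, $C_2\in\mathrm{Evec}(G,\Omega_j\omega_j)$, $D_1\in\mathrm{Ecovec}(G,\Omega_j\omega_{k-\frac{j}{2}-1})$, $D_2\in\mathrm{Ecovec}(G,\Omega_j\omega_{k-1})$.
   Context: Non-singular monad matrices are $(A,B,C,D)$ with $A\in GL(k,\mathbb{C})$, $B\in Mat_{k\times k}(\mathbb{C})$, $C\in Mat_{k\times 2}(\mathbb{C})$, $D\in Mat_{2\times k}(\mathbb{C})$, satisfying $[A,B]+CD=0$ and the full-rank conditions, considered up to $(A,B,C,D)\sim(hAh^{-1},hBh^{-1},hC,Dh^{-1})$; $C_p$ is the $p$-th column of $C$ and $D_p$ the $p$-th row of $D$. Fix $j\in\mathbb{Z}_{2k}$ even and $\omega\in(-\pi,\pi)$. $\mathcal{M}_k^j(\rho)$ is the set of such matrices for which there is $g\in GL(k,\mathbb{C})$ with $e^{\imath\frac{j\pi}{k}}A=gAg^{-1}$, $e^{\imath\frac{\pi}{k}}B=g(B-C_1D_1A^{-1})g^{-1}$, $e^{\imath\frac{\pi}{2k}}e^{\imath\frac{j\pi}{4k}}C_1=e^{\imath\omega}gC_2$, $e^{\imath\frac{\pi}{2k}}e^{\imath\frac{3j\pi}{4k}}C_2=e^{-\imath\omega}gAC_1$,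 $e^{\imath\frac{\pi}{2k}}e^{\imath\frac{3j\pi}{4k}}D_1=e^{-\imath\omega}D_2g^{-1}$, $e^{\imath\frac{\pi}{2k}}e^{\imath\frac{j\pi}{4k}}D_2=e^{\imath\omega}D_1A^{-1}g^{-1}$ (invariance under $\rho(C_{2k}^{j,\omega})$). Then with $G=e^{-\imath\frac{j\pi}{2k}}g^2A$ one has $e^{\imath\frac{2j\pi}{k}}A=GAG^{-1}$, $e^{\imath\frac{2\pi}{k}}B=GBG^{-1}$, $e^{\imath\frac{\pi}{k}}C=GC\,\mathrm{adj}(\sigma_{2j\pi/k})$, $e^{\imath\frac{\pi}{k}}D=\sigma_{2j\pi/k}DG^{-1}$, where $\sigma_\varphi=\mathrm{diag}(e^{-\imath\frac{3\varphi}{4}},e^{-\imath\frac{\varphi}{4}})$, $\mathrm{adj}(\sigma)=\det(\sigma)\sigma^{-1}$. Notation: $\Omega_j=e^{\imath\frac{(2-j)\pi}{2k}}$, $\omega_r=e^{\imath\frac{2\pi r}{k}}$ (indices mod $k$); $\mathrm{Evec}(G,\lambda)$ is the $\lambda$-eigenspace of $G$ and $\mathrm{Ecovec}(G,\lambda)$ the space of row vectors $v$ with $vG=\lambda v$. *)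

(* Defs.v *)
From HB Require Import structures.
From mathcomp Require Import all_boot all_order all_algebra.
From mathcomp Require Import reals trigo.
From mathcomp Require Import complex.
Unset Printing Implicit Defensive.
Import Order.TTheory GRing.Theory Num.Theory.
Local Open Scope ring_scope.

Definition expi {R : realType} (t : R) : R[i] := Complex (cos t) (sin t).

Definition Omega {R : realType} (k j : nat) : R[i] :=
  expi ((2%:R - j%:R) * pi / (2 * k%:R)).

Definition omega {R : realType} (k r : nat) : R[i] :=
  expi (2 * pi * r%:R / k%:R).

(* Non-singular monad matrices: A invertible, [A,B] + CD = 0, and the
   full-rank conditions: for all (x,y) in C^2, alpha = (A - x; B - y; D) is
   injective and beta = (-(B - y), A - x, C) is surjective. *)
Definition monad_nonsingular {R : realType} (k : nat)
  (A B : 'M[R[i]]_k) (C : 'M[R[i]]_(k, 2)) (D : 'M[R[i]]_(2, k)) : Prop :=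
  [/\ A \in unitmx,
      A *m B - B *m A + C *m D = 0,
      (forall x y : R[i],
         \rank (col_mx (A - x%:M) (col_mx (B - y%:M) D)) = k) &
      (forall x y : R[i],
         \rank (row_mx (- (B - y%:M)) (row_mx (A - x%:M) C)) = k)].

(* C_p, D_p (p = 1, 2 corresponds to indices 0, 1) *)
Definition Ccol {R : realType} (k : nat) (C : 'M[R[i]]_(k, 2)) (p : 'I_2) : 'cV[R[i]]_k :=
  col p C.
Definition Drow {R : realType} (k : nat) (D : 'M[R[i]]_(2, k)) (p : 'I_2) : 'rV[R[i]]_k :=
  row p D.

(* invariance under rho(C_{2k}^{j,omega}) witnessed by g *)
Definition rho_invariant_by {R : realType} (k j : nat) (w : R)
  (A B : 'M[R[i]]_k) (C : 'M[R[i]]_(k, 2)) (D : 'M[R[i]]_(2, k))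
  (g : 'M[R[i]]_k) : Prop :=
  let C1 := col 0 C in let C2 := col 1 C in
  let D1 := row 0 D in let D2 := row 1 D in
  let ginv := invmx g in
  let e (t : R) := expi (t * pi / k%:R) in
  [/\ g \in unitmx,
      e (j%:R) *: A = g *m A *m ginv &
      e 1 *: B = g *m (B - C1 *m D1 *m invmx A) *m ginv] /\
  [/\ e (1 / 2) * e (j%:R / 4) *: C1 = expi w *: (g *m C2),
      e (1 / 2) * e (3 * j%:R / 4) *: C2 = expi (- w) *: (g *m A *m C1),
      e (1 / 2) * e (3 * j%:R / 4) *: D1 = expi (- w) *: (D2 *m ginv) &
      e (1 / 2) * e (j%:R / 4) *: D2 = expi w *: (D1 *m invmx A *m ginv)].

Definition in_Mkj {R : realType} (k j : nat) (w : R)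
  (A B : 'M[R[i]]_k) (C : 'M[R[i]]_(k, 2)) (D : 'M[R[i]]_(2, k)) : Prop :=
  monad_nonsingular k A B C D /\ exists g, rho_invariant_by k j w A B C D g.

Definition Gmat {R : realType} (k j : nat) (A g : 'M[R[i]]_k) : 'M[R[i]]_k :=
  expi (- (j%:R * pi / (2 * k%:R))) *: (g *m g *m A).

Definition in_Evec {R : realType} (k : nat) (G : 'M[R[i]]_k) (l : R[i]) (v : 'cV[R[i]]_k) :=
  G *m v = l *: v.
Definition in_Ecovec {R : realType} (k : nat) (G : 'M[R[i]]_k) (l : R[i]) (v : 'rV[R[i]]_k) :=
  v *m G = l *: v.
Definition in_Eval {R : realType} (k : nat) (G : 'M[R[i]]_k) (l : R[i]) :=
  exists2 v : 'cV[R[i]]_k, v != 0 & G *m v = l *: v.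

(* Main.v *)
Require Import Defs.
From HB Require Import structures.
From mathcomp Require Import all_boot all_order all_algebra.
From mathcomp Require Import reals trigo.
From mathcomp Require Import complex.
From mathcomp Require Import spectral.
From mathcomp.algebra_tactics Require Import ring.
Import Order.TTheory GRing.Theory Num.Theory.
From mathcomp Require Import zify.
Import Order.TTheory GRing.Theory Num.Theory.
Local Open Scope ring_scope.
Section S.
Context {R : realType}.

Lemma expiD (a b : R) : expi a * expi b = expi (a + b).
Proof.
rewrite /expi cosD sinD; apply/eqP; rewrite eq_complex /=; apply/andP; split; apply/eqP; ring.
Qed.

Lemma expi0 : expi (0:R) = 1.
Proof. by rewrite /expi cos0 sin0. Qed.

Lemma expiN (a : R) : expi a * expi (- a) = 1.
Proof. by rewrite expiD subrr expi0. Qed.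

Lemma expi_neq0 (a : R) : expi a != 0.
Proof.
apply/negP => /eqP H.
have := expiN a; rewrite H mul0r => /eqP; by rewrite eq_sym oner_eq0.
Qed.

Lemma expi2pi (a : R) : expi (a + 2 * pi) = expi a.
Proof.
rewrite -expiD; have -> : expi (2 * pi) = 1 :> R[i].
  by rewrite /expi mulr_natl cos2pi sin2pi.
by rewrite mulr1.
Qed.
End S.
Lemma row_eig_to_col {F : fieldType} {k} (G : 'M[F]_k) l (v : 'rV_k) :
  v != 0 -> v *m G = l *: v -> exists2 u : 'cV_k, u != 0 & G *m u = l *: u.
Proof.
move=> v0 hv; set M := G - l%:M.
have vM : v *m M = 0 by rewrite /M mulmxBr mul_mx_scalar hv subrr.
have nf : ~~ row_free M.
  by apply/negP => /mulmx_free_eq0 h; move: vM => /eqP; rewrite h (negbTE v0).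
have : kermx M^T != 0 by rewrite kermx_eq0 /row_free mxrank_tr.
case/rowV0Pn => w /sub_kermxP wM w0.
exists w^T; first by rewrite trmx_eq0.
apply/eqP; rewrite -subr_eq0 -mul_scalar_mx -mulmxBl -/M.
by rewrite -[M]trmxK -trmx_mul wM trmx0.
Qed.

Lemma nonsing_CD (R : realType) k (A B : 'M[R[i]]_k) C D :
  (0 < k)%N -> monad_nonsingular k A B C D -> C != 0 /\ D != 0.
Proof.
move=> k0 [Au comm ra rb]; split; apply/negP => /eqP CD0.
- have AB : A *m B = B *m A.
    by apply/eqP; rewrite -subr_eq0; move: comm; rewrite CD0 mul0mx addr0 => ->.
  have [v v0 /andP [sA sB]] := common_eigenvector2 k0 AB.
  case/sub_rVP: sA => x hx; case/sub_rVP: sB => y hy.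
  have := rb x y; move/eqP => rf.
  have := mulmx_free_eq0 v rf.
  rewrite !mul_mx_row mulmxN !mulmxBr !mul_mx_scalar hx hy !subrr oppr0 CD0 mulmx0.
  by rewrite !row_mx0 eqxx (negbTE v0).
- have AB : A^T *m B^T = B^T *m A^T.
    rewrite -!trmx_mul; congr (_^T); apply/eqP; rewrite eq_sym -subr_eq0.
    by move: comm; rewrite CD0 mulmx0 addr0 => ->.
  have [v v0 /andP [sA sB]] := common_eigenvector2 k0 AB.
  case/sub_rVP: sA => x hx; case/sub_rVP: sB => y hy.
  have := ra x y => rf.
  have rf' : row_free (col_mx (A - x%:M) (col_mx (B - y%:M) D))^T.
    by rewrite /row_free mxrank_tr rf.
  have := mulmx_free_eq0 v rf'.
  have ts a : (a%:M)^T = a%:M :> 'M[R[i]]_k by apply: tr_scalar_mx.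
  rewrite !tr_col_mx !mul_mx_row !(linearB trmx) /= !mulmxBr !ts !mul_mx_scalar hx hy !subrr CD0 trmx0 mulmx0.
  by rewrite !row_mx0 eqxx (negbTE v0).
Qed.

Lemma col2_eq0 {F : fieldType} {k} {C : 'M[F]_(k, 2)} : col 0 C = 0 -> col 1 C = 0 -> C = 0.
Proof.
move=> h0 h1; apply/matrixP => a b; rewrite [RHS]mxE.
have : b = 0 \/ b = 1.
  case: b => [[|[|//]]] ?; [left|right]; exact: val_inj.
case=> ->.
- by have := congr1 (fun M : 'cV[F]_k => M a 0) h0; rewrite !mxE.
- by have := congr1 (fun M : 'cV[F]_k => M a 0) h1; rewrite !mxE.
Qed.

Lemma row2_eq0 {F : fieldType} {k} {D : 'M[F]_(2, k)} : row 0 D = 0 -> row 1 D = 0 -> D = 0.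
Proof.
move=> h0 h1; apply/matrixP => a b; rewrite [RHS]mxE.
have : a = 0 \/ a = 1.
  case: a => [[|[|//]]] ?; [left|right]; exact: val_inj.
case=> ->.
- by have := congr1 (fun M : 'rV[F]_k => M 0 b) h0; rewrite !mxE.
- by have := congr1 (fun M : 'rV[F]_k => M 0 b) h1; rewrite !mxE.
Qed.

Lemma expi_eq {R : realType} (a b : R) : a = b -> expi a = expi b.
Proof. by move=> ->. Qed.
Lemma expi_eq2 {R : realType} (a b : R) : a + 2 * pi = b -> expi a = expi b.
Proof. by move=> <-; rewrite expi2pi. Qed.

Theorem mainTheorem8 (R : realType) (k j : nat) (w : R)
  (A B : 'M[R[i]]_k) (C : 'M[R[i]]_(k, 2)) (D : 'M[R[i]]_(2, k)) (g : 'M[R[i]]_k) :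
  (0 < k)%N -> (j < 2 * k)%N -> ~~ odd j ->
  - pi < w < pi ->
  monad_nonsingular k A B C D ->
  rho_invariant_by k j w A B C D g ->
  let G := Gmat k j A g in
  [/\ col 0 C != 0, col 1 C != 0, row 0 D != 0 & row 1 D != 0] /\
  ([/\ in_Eval k G (Omega k j * omega k j./2),
          in_Eval k G (Omega k j * omega k j),
          in_Eval k G (Omega k j * omega k (k - j./2 - 1)) &
          in_Eval k G (Omega k j * omega k (k - 1))] /\
   [/\ in_Evec k G (Omega k j * omega k j./2) (col 0 C),
          in_Evec k G (Omega k j * omega k j) (col 1 C),
          in_Ecovec k G (Omega k j * omega k (k - j./2 - 1)) (row 0 D) &
          in_Ecovec k G (Omega k j * omega k (k - 1)) (row 1 D)]).
Proof.
move=> k0 jk jev wpi ns [[gu hA hB] [h1 h2 h3 h4]] G.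
have ewm : expi w * expi (- w) = 1 := expiN w.
have emw : expi (- w) * expi w = 1 by rewrite mulrC.
have gAC1 : g *m A *m col 0 C = (expi w * (expi (1 / 2 * pi / k%:R) * expi (3 * j%:R / 4 * pi / k%:R))) *: col 1 C.
  by rewrite -(scalerA (expi w)) h2 scalerA ewm scale1r.
have gC2 : g *m col 1 C = (expi (- w) * (expi (1 / 2 * pi / k%:R) * expi (j%:R / 4 * pi / k%:R))) *: col 0 C.
  by rewrite -(scalerA (expi (- w))) h1 scalerA emw scale1r.
have hD2 : row 1 D = (expi w * (expi (1 / 2 * pi / k%:R) * expi (3 * j%:R / 4 * pi / k%:R))) *: (row 0 D *m g).
  have e3 : row 1 D *m invmx g = (expi w * (expi (1 / 2 * pi / k%:R) * expi (3 * j%:R / 4 * pi / k%:R))) *: row 0 D.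
    by rewrite -(scalerA (expi w)) h3 scalerA ewm scale1r.
  by rewrite scalemxAl -e3 -mulmxA mulVmx // mulmx1.
have hD1 : row 0 D = (expi (- w) * (expi (1 / 2 * pi / k%:R) * expi (j%:R / 4 * pi / k%:R))) *: (row 1 D *m g *m A).
  have e4 : row 0 D *m invmx A *m invmx g = (expi (- w) * (expi (1 / 2 * pi / k%:R) * expi (j%:R / 4 * pi / k%:R))) *: row 1 D.
    by rewrite -(scalerA (expi (- w))) h4 scalerA emw scale1r.
  rewrite !scalemxAl -e4.
  by rewrite -(mulmxA _ (invmx g) g) mulVmx // mulmx1 -mulmxA mulVmx ?mulmx1 //; case: ns.
have hgA : g *m A = expi (j%:R * pi / k%:R) *: (A *m g).
  by rewrite scalemxAl hA -mulmxA mulVmx // mulmx1.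
have Hj : j%:R = 2 * (j./2)%:R :> R.
  by rewrite -{1}(odd_double_half j) (negbTE jev) add0n -muln2 natrM mulrC.
have hk : (j./2 < k)%N by move: jk; rewrite -{1}(odd_double_half j) (negbTE jev) add0n -muln2; lia.
have Hk1 : (k - 1)%:R = k%:R - 1 :> R by rewrite natrB.
have Hk : k%:R = (k - j./2 - 1)%:R + (j./2)%:R + 1 :> R.
  by rewrite -!natrD natr1; have -> : (k - j./2 - 1 + j./2).+1 = k by lia.
have knz : k%:R != 0 :> R by rewrite pnatr_eq0 -lt0n.
have EC1 : G *m col 0 C = (Omega k j * omega k j./2) *: col 0 C.
  have e : g *m g *m A *m col 0 C = ((expi w * (expi (1 / 2 * pi / k%:R) * expi (3 * j%:R / 4 * pi / k%:R))) * (expi (- w) * (expi (1 / 2 * pi / k%:R) * expi (j%:R / 4 * pi / k%:R)))) *: col 0 C.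
    by rewrite -(mulmxA g g A) -(mulmxA g (g *m A)) gAC1 -scalemxAr gC2 scalerA.
  rewrite /G /Gmat -scalemxAl e scalerA; congr (_ *: _).
  rewrite /Omega /omega !mulrA !expiD; apply: expi_eq; rewrite Hj.
  by field; rewrite -?Hk.
have EC2 : G *m col 1 C = (Omega k j * omega k j) *: col 1 C.
  rewrite /G /Gmat -scalemxAl -(mulmxA g g A) hgA -scalemxAr -scalemxAl.
  rewrite (mulmxA g A) -(mulmxA (g *m A) g) gC2 -scalemxAr gAC1 !scalerA.
  congr (_ *: _).
  rewrite /Omega /omega !mulrA !expiD; apply: expi_eq; rewrite Hj.
  by field; rewrite -?Hk.
have ED1 : row 0 D *m G = (Omega k j * omega k (k - j./2 - 1)) *: row 0 D.
  rewrite /G /Gmat -scalemxAr [in RHS]hD1 hD2 -!scalemxAl !scalerA !mulmxA.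
  congr (_ *: _).
  rewrite /Omega /omega !mulrA !expiD; apply: expi_eq2; rewrite Hj Hk.
  by field; rewrite -?Hk.
have ED2 : row 1 D *m G = (Omega k j * omega k (k - 1)) *: row 1 D.
  rewrite /G /Gmat -scalemxAr -(mulmxA g g A) hgA -scalemxAr -scalemxAr !scalerA.
  rewrite [in RHS]hD2 hD1 -!scalemxAl !scalerA !mulmxA.
  congr (_ *: _).
  rewrite /Omega /omega !mulrA !expiD; apply: expi_eq2; rewrite Hk1 Hj Hk.
  by field; rewrite -?Hk.
have [Cn Dn] := @nonsing_CD R k A B C D k0 ns.
have Au : A \in unitmx by case: ns.
have C10 : col 0 C = 0 -> col 1 C = 0.
  move=> h; have : g *m col 1 C = 0 by rewrite gC2 h scaler0.
  by move=> /(congr1 (mulmx (invmx g))); rewrite mulmxA mulVmx // mul1mx mulmx0.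
have C20 : col 1 C = 0 -> col 0 C = 0.
  move=> h; move: h1; rewrite h mulmx0 scaler0 => /eqP.
  by rewrite scaler_eq0 !mulf_eq0 !(negbTE (expi_neq0 _)) /= => /eqP.
have D10 : row 0 D = 0 -> row 1 D = 0 by move=> h; rewrite hD2 h mul0mx scaler0.
have D20 : row 1 D = 0 -> row 0 D = 0 by move=> h; rewrite hD1 h !mul0mx scaler0.
have nC1 : col 0 C != 0.
  by apply/negP => /eqP h; move: Cn; rewrite (col2_eq0 h (C10 h)) eqxx.
have nC2 : col 1 C != 0.
  by apply/negP => /eqP h; move: Cn; rewrite (col2_eq0 (C20 h) h) eqxx.
have nD1 : row 0 D != 0.
  by apply/negP => /eqP h; move: Dn; rewrite (row2_eq0 h (D10 h)) eqxx.
have nD2 : row 1 D != 0.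
  by apply/negP => /eqP h; move: Dn; rewrite (row2_eq0 (D20 h) h) eqxx.
split; first by [].
split; last by [].
split.
- by exists (col 0 C).
- by exists (col 1 C).
- exact: row_eig_to_col nD1 ED1.
- exact: row_eig_to_col nD2 ED2.
Qed.
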